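(* Let $M$ be a magma satisfying $(xy)z = x(yz)$ and $x(yx) = x$ for all $x,y,z\in M$. Then $M$ satisfies $xy = x$ for all $x,y\in M$ if and only if $M$ avoids the $2$-element right zero band $2_{RZ}$ on $\{0,1\}$ with Cayley table \[ \begin{array}{c|cc} 2_{RZ} & 0 & 1 \\ \hline 0 & 0 & 1 \\ 1 & 0 & 1 \end{array}. \]
   Context: A magma is a nonempty set with a binary operation, written by juxtaposition. A magma $M$ avoids a magma $F$ if no submagma of $M$ is isomorphic to $F$. *)

(* Defs.v *)
Definition submagma {M : Type} (op : M -> M -> M) (S : M -> Prop) : Prop :=
  (exists x, S x) /\ (forall x y, S x -> S y -> S (op x y)).

Definition sub_isomorphic {M F : Type} (opM : M -> M -> M) (S : M -> Prop)
  (opF : F -> F -> F) : Prop :=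
  exists f : F -> M,
    (forall a, S (f a)) /\
    (forall a b, f a = f b -> a = b) /\
    (forall y, S y -> exists a, f a = y) /\
    (forall a b, f (opF a b) = opM (f a) (f b)).

Definition avoids {M F : Type} (opM : M -> M -> M) (opF : F -> F -> F) : Prop :=
  ~ (exists S : M -> Prop, submagma opM S /\ sub_isomorphic opM S opF).

Definition RZ2 (x y : bool) : bool := y.

(* Main.v *)
Require Import Defs.
From Stdlib Require Import Classical.

Theorem mainTheorem6 (M : Type) (op : M -> M -> M) (m0 : M)
  (assoc : forall x y z, op (op x y) z = op x (op y z))
  (hxyx : forall x y, op x (op y x) = x) :
  (forall x y, op x y = x) <-> avoids op RZ2.
Proof.
  assert (idem : forall x, op x x = x).
  { intro x. assert (h3 : op x (op x x) = x) by apply hxyx.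
    assert (h4 : op x (op (op x x) x) = x) by apply hxyx.
    rewrite assoc, h3 in h4. exact h4. }
  split.
  - intros H [S [_ [f [_ [inj [_ hom]]]]]].
    specialize (hom false true). unfold RZ2 in hom. rewrite H in hom.
    apply inj in hom. discriminate.
  - intros Hav x y. destruct (classic (op x y = x)) as [e|ne]; [exact e|].
    exfalso. apply Hav.
    exists (fun z => z = x \/ z = op x y). split.
    + split. { exists x. left; reflexivity. }
      intros a b [-> | ->] [-> | ->].
      * left; apply idem.
      * right; rewrite <- assoc, idem; reflexivity.
      * left; rewrite assoc; apply hxyx.
      * right; apply idem.
    + exists (fun b : bool => if b then op x y else x). repeat split.
      * intros [|]; auto.
      * intros [|] [|] h; auto; exfalso; apply ne; auto.
      * intros z [-> | ->]; [exists false | exists true]; reflexivity.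
      * intros [|] [|]; unfold RZ2; simpl.
        -- symmetry; apply idem.
        -- rewrite assoc; symmetry; apply hxyx.
        -- rewrite <- assoc, idem; reflexivity.
        -- symmetry; apply idem.
Qed.
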